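(* Fix $n\in\mathbb{N}$, $n\ge 1$. For every $\Delta\in\mathcal{P}_n$, every $x\in\{0,1\}^n$ and every $i\in\mathbb{Z}_n$: $f^{(\Delta)}_{32,n}(x)_i=1$ if and only if $lab_\Delta((i+1,i))=lab_\Delta((i-1,i))=\oplus$ and $(x_{i-1},x_i,x_{i+1})=(1,0,1)$.
   Context: Cells are indexed by $\mathbb{Z}_n=\{0,\dots,n-1\}$, indices modulo $n$. Rule $32$ has local rule $r_{32}(x_1,x_2,x_3)=x_1\wedge\neg x_2\wedge x_3$ and global function $f_{32,n}(x)_i=r_{32}(x_{i-1},x_i,x_{i+1})$. An update schedule is an ordered partition $\Delta=(\Delta_1,\dots,\Delta_k)$ of $\mathbb{Z}_n$ into nonempty blocks; $\mathcal{P}_n$ is the set of them. For a block $B$ let $f^{(B)}(x)_i=f_{32,n}(x)_i$ if $i\in B$ and $x_i$ otherwise; $f^{(\Delta)}_{32,n}=f^{(\Delta_k)}\circ\cdots\circ f^{(\Delta_1)}$. For $u,v\in\mathbb{Z}_n$ with $u\in\Delta_a$, $v\in\Delta_b$, $lab_\Delta((u,v))=\oplus$ if $b\le a$ and $\ominus$ if $a<b$. *)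

(* Defs.v *)
From mathcomp Require Import all_boot.
Set Implicit Arguments. Unset Strict Implicit. Unset Printing Implicit Defensive.

Definition r32 (x1 x2 x3 : bool) : bool := [&& x1, ~~ x2 & x3].

Definition f32 (n : nat) (x : {ffun 'I_n -> bool}) : {ffun 'I_n -> bool} :=
  [ffun i => r32 (x (ord_pred i)) (x i) (x (ordS i))].

Definition fblock (n : nat) (B : pred 'I_n) (x : {ffun 'I_n -> bool})
  : {ffun 'I_n -> bool} :=
  [ffun i => if B i then f32 x i else x i].

(* An ordered partition (Delta_1,...,Delta_k) of Z_n into nonempty blocks is
   encoded by k and a surjection d : 'I_n -> 'I_k; Delta_{a+1} = d^-1(a). *)
Definition is_schedule (n k : nat) (d : {ffun 'I_n -> 'I_k}) : Prop :=
  forall a : 'I_k, exists i : 'I_n, d i = a.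

(* f^(Delta) = f^(Delta_k) o ... o f^(Delta_1): blocks applied in order 0..k-1 *)
Definition fsched (n k : nat) (d : {ffun 'I_n -> 'I_k}) (x : {ffun 'I_n -> bool})
  : {ffun 'I_n -> bool} :=
  foldl (fun y (a : 'I_k) => fblock [pred i | d i == a] y) x (enum 'I_k).

Inductive label := LPlus | LMinus.

Definition lab (n k : nat) (d : {ffun 'I_n -> 'I_k}) (u v : 'I_n) : label :=
  if (d v <= d u)%N then LPlus else LMinus.

(* Main.v *)
Require Import Defs.
From mathcomp Require Import all_boot.

Definition zst (n k : nat) (d : {ffun 'I_n -> 'I_k}) (x : {ffun 'I_n -> bool}) (m : nat) :=
  foldl (fun y (a : 'I_k) => fblock [pred i | d i == a] y) x (take m (enum 'I_k)).
Arguments zst {n k}.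

Lemma zS n k (d : {ffun 'I_n -> 'I_k}) (x : {ffun 'I_n -> bool}) m (c : 'I_n) : m < k ->
  zst d x m.+1 c = if nat_of_ord (d c) == m then
     r32 (zst d x m (ord_pred c)) (zst d x m c) (zst d x m (ordS c))
   else zst d x m c.
Proof.
move=> hm; rewrite /zst (take_nth (d c)) ?size_enum_ord // foldl_rcons.
rewrite /fblock ffunE /= /f32 ffunE.
have -> : (d c == nth (d c) (enum 'I_k) m) = (nat_of_ord (d c) == m).
  by rewrite -val_eqE /= nth_enum_ord.
done.
Qed.

Lemma zA n k (d : {ffun 'I_n -> 'I_k}) (x : {ffun 'I_n -> bool}) m (c : 'I_n) : m <= d c -> zst d x m c = x c.
Proof.
elim: m => [|m IH] h; first by rewrite /zst take0.
have hk : m < k by apply: leq_trans h (ltnW (ltn_ord (d c))).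
rewrite zS // (_ : (nat_of_ord (d c) == m) = false); last by apply/negbTE; rewrite neq_ltn h orbT.
by apply: IH; apply: ltnW.
Qed.

Lemma zStable n k (d : {ffun 'I_n -> 'I_k}) (x : {ffun 'I_n -> bool}) m (c : 'I_n) : d c < m -> m <= k ->
  zst d x m c = zst d x (d c).+1 c.
Proof.
elim: m => [|m IH] h1 h2 //.
rewrite ltnS leq_eqVlt in h1; case/orP: h1 => [/eqP<-|h1] //.
rewrite zS // (_ : (nat_of_ord (d c) == m) = false); last by apply/negbTE; rewrite neq_ltn h1.
by apply: IH => //; apply: ltnW.
Qed.

Lemma zB n k (d : {ffun 'I_n -> 'I_k}) (x : {ffun 'I_n -> bool}) m (c : 'I_n) : m <= k -> d c < m -> zst d x m c ->
  forall u, (u = ord_pred c \/ u = ordS c) -> d c <= d u -> x u.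
Proof.
elim: m => [|m IH] hk h1 hz u hu hdu //.
case E: (nat_of_ord (d c) == m).
  move: hz; rewrite zS // E /r32 => /and3P[hp _ hs].
  rewrite -(@zA n k d x m u); last by rewrite -(eqP E).
  by case: hu => ->.
move: hz; rewrite zS // E => hz.
apply: (IH (ltnW hk)) hz u hu hdu.
by rewrite ltnS leq_eqVlt E /= in h1.
Qed.

Theorem mainTheorem12 (n : nat) (hn : (1 <= n)%N) (k : nat)
  (d : {ffun 'I_n -> 'I_k}) (hd : is_schedule d)
  (x : {ffun 'I_n -> bool}) (i : 'I_n) :
  fsched d x i = true <->
  (lab d (ordS i) i = LPlus /\ lab d (ord_pred i) i = LPlus /\
   (x (ord_pred i), x i, x (ordS i)) = (true, false, true)).
Proof.
have hf : fsched d x i = zst d x k i.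
  by rewrite /fsched /zst take_oversize // size_enum_ord.
have hk : d i < k := ltn_ord _.
rewrite hf (@zStable _ _ d x _ _ hk (leqnn k)) zS // eqxx (@zA _ _ d x _ _ (leqnn _)) /lab.
split.
- move=> /and3P[hp hi hs].
  have Lp : (d i <= d (ord_pred i))%N.
    rewrite leqNgt; apply/negP => lt.
    have := @zB _ _ d x (d i) (ord_pred i) (ltnW hk) lt hp.
    move=> /(_ i (or_intror (esym (ord_predK i))) (ltnW lt)).
    by rewrite (negbTE hi).
  have Ls : (d i <= d (ordS i))%N.
    rewrite leqNgt; apply/negP => lt.
    have := @zB _ _ d x (d i) (ordS i) (ltnW hk) lt hs.
    move=> /(_ i (or_introl (esym (ordSK i))) (ltnW lt)).
    by rewrite (negbTE hi).
  rewrite Lp Ls; split=> //; split=> //.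
  move: hp hs; rewrite !zA // => -> ->.
  by rewrite (negbTE hi).
- case; case: ifP => // Ls _; case; case: ifP => // Lp _ [hp hi hs].
  by rewrite !zA // hp hi hs.
Qed.
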